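(* Let $1\le\tau_1<\dots<\tau_m$ be thresholds and $P,Q$ two candidates. If $P$ beats $Q$ under Weighted Majority Rule 4, then $SC(P)\le\tau_m\,SC(Q)+2\,SC(Z)$ for every point $Z$ of the metric space.
   Context: Voters $N$ and candidates are points of an arbitrary metric space $(X,d)$; $SC(Y)=\sum_{i\in N}d(i,Y)$ for $Y\in X$. Set $\tau_0=1/\tau_1$, $\tau_{m+1}=\infty$, $\delta=\max_{0\le l\le m}\frac{\tau_l\tau_{l+1}+2\tau_{l+1}-1}{\tau_l\tau_{l+1}+1}$ (the $l=m$ term meaning $(\tau_m+2)/\tau_m$), and $k\in\{1,\dots,m\}$ with $\tau_k\le\delta<\tau_{k+1}$; $\frac{\tau_{m+1}-\delta}{\tau_{m+1}-1}:=1$. Preference strength of $i$ for $P$ over $Q$ is $\alpha_i^{PQ}=d(i,Q)/d(i,P)$ when $d(i,P)\le d(i,Q)$. $A_l=\{i: d(i,P)\le d(i,Q),\ \tau_l\le\alpha_i^{PQ}<\tau_{l+1}\}$, $B_l=\{j: d(j,Q)\le d(j,P),\ \tau_l\le\alpha_j^{QP}<\tau_{l+1}\}$, $C$ the remaining voters. Weighted Majority Rule 4: for $l<k$ voters in $A_l\cup B_l$ get weight $\frac{(\delta+1)(\tau_l\tau_{l+1}-1)}{(\tau_l+1)(\tau_{l+1}+1)}$; for $l\ge k$ they get weight $\frac{\tau_{l+1}-\delta}{\tau_{l+1}-1}+\frac{\delta\tau_l-1}{\tau_l+1}$; voters in $C$ get weight $0$; $P$ beats $Q$ iff the total weight of $\bigcup_lA_l$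 is at least that of $\bigcup_lB_l$. *)

(* Defs.v *)
From Stdlib Require Import Reals Lra Lia List Arith.
Import ListNotations.
Open Scope R_scope.

Definition rsum {A : Type} (f : A -> R) (s : list A) : R :=
  fold_right (fun x acc => f x + acc) 0 s.

Definition rleb (x y : R) : bool := if Rle_dec x y then true else false.
Definition rltb (x y : R) : bool := if Rlt_dec x y then true else false.

Definition SC {X : Type} (d : X -> X -> R) (voters : list X) (Y : X) : R :=
  rsum (fun i => d i Y) voters.

(* thresholds tau_1..tau_m are tau 1 .. tau m; tau_0 := 1/tau_1.
   (tau_{m+1} = infinity is handled explicitly below.) *)
Definition tau_ext (tau : nat -> R) (l : nat) : R :=
  if Nat.eqb l 0 then / tau 1%nat else tau l.

Definition dterm (tau : nat -> R) (m l : nat) : R :=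
  if Nat.eqb l m then (tau m + 2) / tau m
  else (tau_ext tau l * tau (S l) + 2 * tau (S l) - 1)
       / (tau_ext tau l * tau (S l) + 1).

Definition delta (tau : nat -> R) (m : nat) : R :=
  fold_right Rmax (dterm tau m 0) (map (dterm tau m) (seq 0 (S m))).

(* i in A_l : d(i,P) <= d(i,Q) and tau_l <= alpha_i^{PQ} < tau_{l+1},
   with alpha = d(i,Q)/d(i,P) read multiplicatively (alpha = +infinity when
   d(i,P)=0), and tau_{m+1} = +infinity. *)
Definition inAb {X : Type} (d : X -> X -> R) (tau : nat -> R) (m : nat)
  (P Q : X) (l : nat) (i : X) : bool :=
  rleb (d i P) (d i Q) && rleb (tau_ext tau l * d i P) (d i Q) &&
  (if Nat.ltb l m then rltb (d i Q) (tau (S l) * d i P) else true).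

(* weight of voters in A_l u B_l under Weighted Majority Rule 4 *)
Definition wmr4_weight (tau : nat -> R) (m k : nat) (l : nat) : R :=
  let dl := delta tau m in
  let a := tau_ext tau l in
  let b := tau (S l) in
  if Nat.ltb l k then (dl + 1) * (a * b - 1) / ((a + 1) * (b + 1))
  else (if Nat.eqb l m then 1 else (b - dl) / (b - 1)) + (dl * a - 1) / (a + 1).

(* total weight of the union of the A_l (the A_l are pairwise disjoint);
   voters in C (in no A_l) contribute 0. *)
Definition weightA {X : Type} (d : X -> X -> R) (voters : list X)
  (tau : nat -> R) (m k : nat) (P Q : X) : R :=
  rsum (fun i => rsum (fun l => if inAb d tau m P Q l i then wmr4_weight tau m k l else 0)
                      (seq 0 (S m))) voters.

(* P beats Q under WMR4: weight(U A_l) >= weight(U B_l), where B_l is A_l with P,Q swapped *)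
Definition beats_WMR4 {X : Type} (d : X -> X -> R) (voters : list X)
  (tau : nat -> R) (m k : nat) (P Q : X) : Prop :=
  weightA d voters tau m k Q P <= weightA d voters tau m k P Q.

(* Main.v *)
Require Import Defs.
From Stdlib Require Import Reals List Arith Lra Lia Psatz Bool.
Open Scope R_scope.
Open Scope bool_scope.
Open Scope R_scope.

Lemma rleb_true x y : rleb x y = true <-> x <= y.
Proof. unfold rleb; destruct (Rle_dec x y); split; intros; auto; try discriminate; lra. Qed.
Lemma rltb_true x y : rltb x y = true <-> x < y.
Proof. unfold rltb; destruct (Rlt_dec x y); split; intros; auto; try discriminate; lra. Qed.

Section Sums.
Variable p : nat -> bool.
Variable w : nat -> R.

Lemma sum_zero s : (forall l, In l s -> p l = false) ->
  rsum (fun l => if p l then w l else 0) s = 0.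
Proof.
  induction s as [|h t IH]; intros H; simpl; auto.
  rewrite H by (left; auto). rewrite IH; [lra|]. intros; apply H; right; auto.
Qed.

Lemma sum_nonneg s : (forall l, In l s -> 0 <= w l) ->
  0 <= rsum (fun l => if p l then w l else 0) s.
Proof.
  induction s as [|h t IH]; intros H; simpl; [lra|].
  assert (0 <= rsum (fun l => if p l then w l else 0) t) by (apply IH; intros; apply H; right; auto).
  destruct (p h); [ assert (0 <= w h) by (apply H; left; auto) |]; lra.
Qed.

Lemma sum_ge_mem s l0 : (forall l, In l s -> 0 <= w l) -> In l0 s -> p l0 = true ->
  w l0 <= rsum (fun l => if p l then w l else 0) s.
Proof.
  induction s as [|h t IH]; intros H Hin Hp; simpl; [destruct Hin|].
  assert (0 <= rsum (fun l => if p l then w l else 0) t) by (apply sum_nonneg; intros; apply H; right; auto).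
  destruct Hin as [<-|Hin].
  - rewrite Hp; lra.
  - assert (w l0 <= rsum (fun l => if p l then w l else 0) t) by (apply IH; auto; intros; apply H; right; auto).
    destruct (p h); [ assert (0 <= w h) by (apply H; left; auto) |]; lra.
Qed.

Lemma sum_le_W s W : NoDup s -> 0 <= W ->
  (forall l1 l2, In l1 s -> In l2 s -> p l1 = true -> p l2 = true -> l1 = l2) ->
  (forall l, In l s -> w l <= W) ->
  rsum (fun l => if p l then w l else 0) s <= W.
Proof.
  induction s as [|h t IH]; intros Hnd HW Hu Hw; simpl; [lra|].
  inversion Hnd; subst.
  destruct (p h) eqn:Eh.
  - rewrite sum_zero. assert (w h <= W) by (apply Hw; left; auto). lra.
    intros l Hl. destruct (p l) eqn:El; auto.
    assert (l = h) by (apply Hu; auto; [right|left]; auto). subst; contradiction.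
  - rewrite Rplus_0_l. apply IH; auto. intros; apply Hu; auto; right; auto. intros; apply Hw; right; auto.
Qed.
End Sums.
Lemma w_lt_k dl a b t : 1 <= dl -> 0 < a -> 1 <= b -> 1 <= a*b -> b <= t ->
  0 <= (dl+1)*(a*b-1)/((a+1)*(b+1)) <= 1 + (dl*t-1)/(t+1).
Proof.
  intros. split.
  - apply Rmult_le_pos; [nra| apply Rlt_le, Rinv_0_lt_compat; nra].
  - replace (1 + (dl*t-1)/(t+1)) with ((dl+1)*t/(t+1)) by (field; lra).
    apply Rle_trans with ((dl+1)*b/(b+1)).
    + apply Rmult_le_reg_r with ((a+1)*(b+1)); [nra|].
      unfold Rdiv. rewrite Rmult_assoc, Rinv_l by nra.
      replace ((dl + 1) * b * / (b + 1) * ((a + 1) * (b + 1))) with ((dl+1)*b*(a+1)) by (field; lra).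
      nra.
    + apply Rmult_le_reg_r with ((b+1)*(t+1)); [nra|].
      replace ((dl + 1) * b / (b + 1) * ((b + 1) * (t + 1))) with ((dl+1)*b*(t+1)) by (field; lra).
      replace ((dl + 1) * t / (t + 1) * ((b + 1) * (t + 1))) with ((dl+1)*t*(b+1)) by (field; lra).
      nra.
Qed.
Lemma w_ge_k dl a b t : 1 <= dl -> 1 <= a -> dl < b -> a <= t ->
  0 <= (b - dl)/(b-1) + (dl*a-1)/(a+1) <= 1 + (dl*t-1)/(t+1).
Proof.
  intros.
  assert (0 <= (b - dl)/(b-1) <= 1).
  { split. apply Rmult_le_pos; [lra| apply Rlt_le, Rinv_0_lt_compat; lra].
    apply Rmult_le_reg_r with (b-1); [lra|]. unfold Rdiv. rewrite Rmult_assoc, Rinv_l by lra. lra. }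
  assert (0 <= (dl*a-1)/(a+1) <= (dl*t-1)/(t+1)).
  { split. apply Rmult_le_pos; [nra| apply Rlt_le, Rinv_0_lt_compat; lra].
    apply Rmult_le_reg_r with ((a+1)*(t+1)); [nra|].
    replace ((dl * a - 1) / (a + 1) * ((a + 1) * (t + 1))) with ((dl*a-1)*(t+1)) by (field; lra).
    replace ((dl * t - 1) / (t + 1) * ((a + 1) * (t + 1))) with ((dl*t-1)*(a+1)) by (field; lra).
    nra. }
  lra.
Qed.

Lemma tau_mono (tau : nat -> R) m
  (Htau_inc : forall l, (1 <= l)%nat -> (l < m)%nat -> tau l < tau (S l)) :
  forall i j, (1 <= i)%nat -> (i <= j)%nat -> (j <= m)%nat -> tau i <= tau j.
Proof.
  intros i j Hi Hij Hjm. induction Hij; [lra|].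
  assert (tau m0 < tau (S m0)) by (apply Htau_inc; lia).
  assert (tau i <= tau m0) by (apply IHHij; lia). lra.
Qed.

Lemma uniq_l (tau : nat -> R) m x y
  (Htau1 : 1 <= tau 1%nat)
  (Hmono : forall i j, (1 <= i)%nat -> (i <= j)%nat -> (j <= m)%nat -> tau i <= tau j)
  (Hx : 0 <= x) :
  forall l1 l2, (l1 <= m)%nat -> (l2 <= m)%nat ->
  (rleb x y && rleb (tau_ext tau l1 * x) y && (if Nat.ltb l1 m then rltb y (tau (S l1) * x) else true)) = true ->
  (rleb x y && rleb (tau_ext tau l2 * x) y && (if Nat.ltb l2 m then rltb y (tau (S l2) * x) else true)) = true ->
  l1 = l2.
Proof.
  assert (Hgen : forall l1 l2, (l1 < l2)%nat -> (l2 <= m)%nat ->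
    (rleb x y && rleb (tau_ext tau l1 * x) y && (if Nat.ltb l1 m then rltb y (tau (S l1) * x) else true)) = true ->
    (rleb x y && rleb (tau_ext tau l2 * x) y && (if Nat.ltb l2 m then rltb y (tau (S l2) * x) else true)) = true -> False).
  { intros l1 l2 Hlt Hl2 H1 H2.
    apply andb_prop in H1 as [_ H1]. apply andb_prop in H2 as [H2 _].
    apply andb_prop in H2 as [_ H2]. apply rleb_true in H2.
    assert (E: Nat.ltb l1 m = true) by (apply Nat.ltb_lt; lia). rewrite E in H1.
    apply rltb_true in H1.
    unfold tau_ext in H2. destruct (Nat.eqb l2 0) eqn:E2; [apply Nat.eqb_eq in E2; lia|].
    assert (tau (S l1) <= tau l2) by (apply Hmono; lia).
    assert (tau (S l1) * x <= tau l2 * x) by (apply Rmult_le_compat_r; auto). lra. }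
  intros l1 l2 H1 H2 A B. destruct (lt_eq_lt_dec l1 l2) as [[Hl|Hl]|Hl]; auto.
  - exfalso; eapply Hgen; eauto.
  - exfalso; eapply Hgen; eauto.
Qed.

Lemma weights_ok (m : nat) (tau : nat -> R)
  (Hm : (1 <= m)%nat)
  (Htau1 : 1 <= tau 1%nat)
  (Hmono : forall i j, (1 <= i)%nat -> (i <= j)%nat -> (j <= m)%nat -> tau i <= tau j)
  (k : nat) (Hk1 : (1 <= k)%nat) (Hkm : (k <= m)%nat)
  (Hk_lo : tau k <= delta tau m)
  (Hk_hi : (k < m)%nat -> delta tau m < tau (S k)) :
  forall l, (l <= m)%nat -> 0 <= wmr4_weight tau m k l <= wmr4_weight tau m k m.
Proof.
  assert (Hdl : 1 <= delta tau m).
  { assert (1 <= tau k) by (assert (tau 1%nat <= tau k) by (apply Hmono; lia); lra). lra. }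
  assert (Htm : 1 <= tau m) by (assert (tau 1%nat <= tau m) by (apply Hmono; lia); lra).
  assert (EW : wmr4_weight tau m k m = 1 + (delta tau m * tau m - 1)/(tau m + 1)).
  { unfold wmr4_weight. assert (E1: Nat.ltb m k = false) by (apply Nat.ltb_ge; lia).
    rewrite E1, Nat.eqb_refl. unfold tau_ext.
    assert (E2: Nat.eqb m 0 = false) by (apply Nat.eqb_neq; lia). rewrite E2. reflexivity. }
  rewrite EW. intros l Hl.
  unfold wmr4_weight. destruct (Nat.ltb l k) eqn:Elk.
  - apply Nat.ltb_lt in Elk.
    assert (Hb1 : 1 <= tau (S l)) by (assert (tau 1%nat <= tau (S l)) by (apply Hmono; lia); lra).
    assert (Hbt : tau (S l) <= tau m) by (apply Hmono; lia).
    unfold tau_ext. destruct (Nat.eqb l 0) eqn:E0.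
    + apply Nat.eqb_eq in E0; subst l. simpl in *.
      apply w_lt_k; auto. apply Rinv_0_lt_compat; lra.
      rewrite Rinv_l by lra. lra.
    + apply Nat.eqb_neq in E0.
      assert (Ha : tau l <= tau (S l)) by (apply Hmono; lia).
      assert (Ha1 : 1 <= tau l) by (assert (tau 1%nat <= tau l) by (apply Hmono; lia); lra).
      apply w_lt_k; auto; nra.
  - apply Nat.ltb_ge in Elk.
    unfold tau_ext. assert (E0: Nat.eqb l 0 = false) by (apply Nat.eqb_neq; lia). rewrite E0.
    assert (Ha1 : 1 <= tau l) by (assert (tau 1%nat <= tau l) by (apply Hmono; lia); lra).
    assert (Hat : tau l <= tau m) by (apply Hmono; lia).
    destruct (Nat.eqb l m) eqn:Elm.
    + apply Nat.eqb_eq in Elm; subst l.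
      assert (0 <= (delta tau m * tau m - 1) / (tau m + 1)).
      { apply Rmult_le_pos; [nra| apply Rlt_le, Rinv_0_lt_compat; lra]. }
      lra.
    + apply Nat.eqb_neq in Elm.
      assert (delta tau m < tau (S l)).
      { assert (delta tau m < tau (S k)) by (apply Hk_hi; lia).
        assert (tau (S k) <= tau (S l)) by (apply Hmono; lia). lra. }
      apply w_ge_k; auto.
Qed.

Theorem mainTheorem18 (X : Type) (d : X -> X -> R)
  (d_nonneg : forall x y, 0 <= d x y)
  (d_zero : forall x y, d x y = 0 <-> x = y)
  (d_sym : forall x y, d x y = d y x)
  (d_tri : forall x y z, d x z <= d x y + d y z)
  (voters : list X) (m : nat) (tau : nat -> R)
  (Hm : (1 <= m)%nat)
  (Htau1 : 1 <= tau 1%nat)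
  (Htau_inc : forall l, (1 <= l)%nat -> (l < m)%nat -> tau l < tau (S l))
  (k : nat) (Hk1 : (1 <= k)%nat) (Hkm : (k <= m)%nat)
  (Hk_lo : tau k <= delta tau m)
  (Hk_hi : (k < m)%nat -> delta tau m < tau (S k))
  (P Q : X)
  (Hbeats : beats_WMR4 d voters tau m k P Q) :
  forall Z : X, SC d voters P <= tau m * SC d voters Q + 2 * SC d voters Z.
Proof.
  intros Z.
  pose proof (tau_mono tau m Htau_inc) as Hmono.
  pose proof (weights_ok m tau Hm Htau1 Hmono k Hk1 Hkm Hk_lo Hk_hi) as Hw.
  set (W := wmr4_weight tau m k m).
  assert (HW0 : 0 < W).
  { unfold W, wmr4_weight. assert (E1: Nat.ltb m k = false) by (apply Nat.ltb_ge; lia).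
    rewrite E1, Nat.eqb_refl. unfold tau_ext.
    assert (E2: Nat.eqb m 0 = false) by (apply Nat.eqb_neq; lia). rewrite E2.
    assert (1 <= tau m) by (assert (tau 1%nat <= tau m) by (apply Hmono; lia); lra).
    assert (1 <= delta tau m) by (assert (tau 1%nat <= tau k) by (apply Hmono; lia); lra).
    assert (0 <= (delta tau m * tau m - 1) / (tau m + 1)).
    { apply Rmult_le_pos; [nra| apply Rlt_le, Rinv_0_lt_compat; lra]. }
    lra. }
  assert (Htm : 1 <= tau m) by (assert (tau 1%nat <= tau m) by (apply Hmono; lia); lra).
  set (e := Rmax 0 (d Z P - d Z Q)).
  assert (He0 : 0 <= e) by apply Rmax_l.
  assert (He1 : d Z P - d Z Q <= e) by apply Rmax_r.
  set (SA := fun P Q i => rsum (fun l => if inAb d tau m P Q l i then wmr4_weight tau m k l else 0) (seq 0 (S m))).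
  assert (Hwin : forall l, In l (seq 0 (S m)) -> 0 <= wmr4_weight tau m k l <= W).
  { intros l Hl. apply in_seq in Hl. apply Hw. lia. }
  assert (Hvoter : forall i, W * (d i P - tau m * d i Q - 2 * d i Z) <= e * (SA Q P i - SA P Q i)).
  { intros i.
    assert (Hx : d i P <= d i Z + d Z P) by apply d_tri.
    assert (Hy : d Z Q <= d i Z + d i Q) by (pose proof (d_tri Z i Q) as Ht; rewrite (d_sym Z i) in Ht; exact Ht).
    assert (Hx' : d Z P <= d i Z + d i P) by (pose proof (d_tri Z i P) as Ht; rewrite (d_sym Z i) in Ht; exact Ht).
    assert (Hy' : d i Q <= d i Z + d Z Q) by apply d_tri.
    pose proof (d_nonneg i P). pose proof (d_nonneg i Q). pose proof (d_nonneg i Z).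
    destruct (Rlt_le_dec (d i P) (d i Q)) as [Hlt|Hge].
    -
      assert (HB : SA Q P i = 0).
      { unfold SA. apply sum_zero. intros l _. unfold inAb.
        destruct (rleb (d i Q) (d i P)) eqn:E; auto. apply rleb_true in E. lra. }
      assert (HA : SA P Q i <= W).
      { unfold SA. apply sum_le_W. apply seq_NoDup. lra.
        intros l1 l2 G1 G2. apply in_seq in G1. apply in_seq in G2.
        apply (uniq_l tau m (d i P) (d i Q) Htau1 Hmono); auto; lia.
        intros; apply Hwin; auto. }
      assert (HA0 : 0 <= SA P Q i) by (unfold SA; apply sum_nonneg; intros; apply Hwin; auto).
      rewrite HB.
      assert (d i P - tau m * d i Q - 2 * d i Z + e <= 0).
      { assert (d i Q <= tau m * d i Q) by nra.
        destruct (Rle_dec (d Z P - d Z Q) 0).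
        - assert (e = 0) by (unfold e; apply Rmax_left; lra). lra.
        - apply Rnot_le_lt in n. assert (e = d Z P - d Z Q) by (unfold e; apply Rmax_right; apply Rlt_le; exact n). lra. }
      assert (e * SA P Q i <= e * W) by (apply Rmult_le_compat_l; auto).
      nra.
    - destruct (Rle_lt_dec (d i P) (d i Q)) as [Hle|Hgt].
      + assert (Heq : d i P = d i Q) by lra.
        assert (HSA : SA Q P i = SA P Q i) by (unfold SA, inAb; rewrite Heq; reflexivity).
        rewrite HSA. replace (SA P Q i - SA P Q i) with 0 by ring. rewrite Rmult_0_r.
        assert (d i Q <= tau m * d i Q) by nra.
        assert (Hf : d i P - tau m * d i Q - 2 * d i Z <= 0) by lra.
        assert (W * (d i P - tau m * d i Q - 2 * d i Z) <= W * 0) by (apply Rmult_le_compat_l; lra). lra.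
      + assert (HA : SA P Q i = 0).
        { unfold SA. apply sum_zero. intros l _. unfold inAb.
          destruct (rleb (d i P) (d i Q)) eqn:E; auto. apply rleb_true in E. lra. }
        rewrite HA.
        assert (HB0 : 0 <= SA Q P i) by (unfold SA; apply sum_nonneg; intros; apply Hwin; auto).
        destruct (Rle_dec (d i P) (tau m * d i Q)).
        * assert (0 <= e * SA Q P i) by nra. nra.
        * assert (HB : W <= SA Q P i).
          { unfold SA. apply (sum_ge_mem _ (fun l => wmr4_weight tau m k l)).
            intros; apply Hwin; auto. apply in_seq; lia.
            unfold inAb. rewrite Nat.ltb_irrefl.
            unfold tau_ext. assert (E2: Nat.eqb m 0 = false) by (apply Nat.eqb_neq; lia). rewrite E2.
            assert (E3: rleb (d i Q) (d i P) = true) by (apply rleb_true; lra).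
            assert (E4: rleb (tau m * d i Q) (d i P) = true) by (apply rleb_true; lra).
            rewrite E3, E4. reflexivity. }
          assert (d i P - tau m * d i Q - 2 * d i Z <= e) by nra.
          assert (e * W <= e * SA Q P i) by (apply Rmult_le_compat_l; auto).
          nra. }
  assert (Hsum : W * (SC d voters P - tau m * SC d voters Q - 2 * SC d voters Z)
          <= e * (weightA d voters tau m k Q P - weightA d voters tau m k P Q)).
  { unfold SC, weightA. clear Hbeats. induction voters as [|h t IH]; simpl.
    - lra.
    - specialize (Hvoter h). unfold SA in Hvoter.
      match goal with |- W * (?a1 + ?a2 - tau m * (?b1 + ?b2) - 2 * (?c1 + ?c2)) <= e * ((?s1 + ?s2) - (?t1 + ?t2)) =>
        replace (W * (a1 + a2 - tau m * (b1 + b2) - 2 * (c1 + c2))) with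
          (W * (a1 - tau m * b1 - 2 * c1) + W * (a2 - tau m * b2 - 2 * c2)) by ring;
        replace (e * ((s1 + s2) - (t1 + t2))) with (e * (s1 - t1) + e * (s2 - t2)) by ring
      end.
      apply Rplus_le_compat; [exact Hvoter | exact IH]. }
  unfold beats_WMR4 in Hbeats.
  assert (e * (weightA d voters tau m k Q P - weightA d voters tau m k P Q) <= 0) by nra.
  assert (W * (SC d voters P - tau m * SC d voters Q - 2 * SC d voters Z) <= 0) by lra.
  nra.
Qed.
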